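(* Assume (A1), (A2), (A3), and that for each class $c\in[C]$ the revision protocol $\rho^c$ is an excess payoff or a pairwise comparison protocol. If $\mu\in X$ is a rest point of the master equation, i.e., $f^{c,d}_{s,u}(\mu)+f^{c,r}_{s,u}(\mu)=0$ for all $c\in[C]$, $s\in\mathcal S^c$, $u\in\mathcal U^c_D$, then $\mu$ is a mixed stationary Nash equilibrium.
   Context: Model: classes $c\in[C]$ with masses $m^c>0$, finite state sets $\mathcal S^c$, nonempty finite admissible action sets $\mathcal A^c(s)$ ($\mathcal A^c=\bigcup_s\mathcal A^c(s)$), transition kernels $\phi^c(\cdot\mid s,a)\in\mathcal P(\mathcal S^c)$, action rates $\lambda^c>0$; $p=\sum_c|\mathcal S^c|,q=\sum_c|\mathcal A^c|$. $\mathcal U^c_D$ = deterministic policies ($s\mapsto u(s)\in\mathcal A^c(s)$; $u(a\mid s)=\mathbf 1[a=u(s)]$), $n^c=|\mathcal U^c_D|$. $\phi^{c,u}_{ss'}=\phi^c(s\mid s',u(s'))$. (A2): for all $c,u\in\mathcal U^c_D$, $\phi^{c,u}$ has exactly one recurrent communicating class; $\eta^{c,u}$ is the unique stationary distribution of the continuous-time chain with generator $\lambda^c(\phi^{c,u}-I)$. $X=\prod_c\{\mu^c\in\mathbb R_{\ge0}^{\mathcal S^c\times\mathcal U^c_D}:\sum\mu^c=m^c\}$, $X_{\mathcal S\times\mathcal A}=\prod_c\{\nu\in\mathbb R_{\ge0}^{\mathcal S^c\times\mathcal A^c}:\sum\nu=m^c\}$, $X^c_{\mathcal U_D}=\{\sigma\in\mathbb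 R^{n^c}_{\ge0}:\sum\sigma=m^c\}$; $\mu^c_{\mathcal S\times\mathcal A}[s,a]=\sum_u\mu^c[s,u]u(a\mid s)$; $\mu^c[\mathcal S^c,u]=\sum_s\mu^c[s,u]$, $\mu^c[\mathcal S^c,\cdot]=(\mu^c[\mathcal S^c,u])_u$. Rewards $r^c:\mathcal S^c\times\mathcal A^c\times X_{\mathcal S\times\mathcal A}\to\mathbb R$; (A1): each $r^c(s,a,\cdot)$ extends to $\mathbb R^{pq}_{\ge0}$ with an extension continuously differentiable on $X_{\mathcal S\times\mathcal A}$. $F^c_u(\mu)=\sum_{s}\sum_{a\in\mathcal A^c(s)}\eta^{c,u}(s)u(a\mid s)r^c(s,a,\mu_{\mathcal S\times\mathcal A})$, $F^c(\mu)=(F^c_u(\mu))_u$. MSNE: $\mu\in X$ with, for all $c,u$: (i) $\mu^c[\mathcal S^c,u]>0\Rightarrow F^c_u(\mu)\ge F^c_v(\mu)\ \forall v\in\mathcal U^c_D$; (ii) $\mu^c[s,u]=\eta^{c,u}(s)\mu^c[\mathcal S^c,u]$ for all $s$. Revision protocol of class $c$: $\rho^c:\mathbb R^{n^c}\times X^c_{\mathcal U_D}\to\mathbb R^{n^c\times n^c}_{\ge0}$ with revision rate $R^c>0$; (A3): $\rho^c$ Lipschitz and $R^c\ge\sup_{\mu\in X}\sum_{v\ne u}\rho^c_{uv}(F^c(\mu),\mu^c[\mathcal S^c,\cdot])$ for all $u$. Excess payoff: $\rho^c_{uv}(F,\sigma)=\tau^c_v(\hat F)$ with $\hat F=F-\mathbf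 1F^\top\sigma/m^c$ and $\tau^c:\mathbb R^{n^c}\to\mathbb R^{n^c}_{\ge0}$ Lipschitz with $\hat F\notin\mathbb R^{n^c}_{\le0}\Rightarrow\tau^c(\hat F)^\top\hat F>0$; pairwise comparison: $\rho^c_{uv}(F,\sigma)=\tau^c_{uv}(F)$ with $\tau^c$ Lipschitz, nonnegative and $\mathrm{sign}(\tau^c_{uv}(F))=\mathrm{sign}(\max(0,F_v-F_u))$. Master equation vector fields: $f^{c,d}_{s,u}(\mu)=\lambda^c\sum_{s'}\sum_{a'\in\mathcal A^c(s')}\phi^c(s\mid s',a')u(a'\mid s')\mu^c[s',u]-\lambda^c\mu^c[s,u]$; $f^{c,r}_{s,u}(\mu)=\sum_{u'}\mu^c[s,u']\rho^c_{u'u}(F^c(\mu),\mu^c[\mathcal S^c,\cdot])-\mu^c[s,u]\sum_{u'}\rho^c_{uu'}(F^c(\mu),\mu^c[\mathcal S^c,\cdot])$. *)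

(* Defs.v *)
From HB Require Import structures.
From mathcomp Require Import all_boot all_order all_algebra.
From mathcomp Require Import all_classical all_reals all_analysis.
Import Order.TTheory GRing.Theory Num.Theory.
Import numFieldNormedType.Exports.
Local Open Scope classical_set_scope.
Local Open Scope ring_scope.

(* The data of the model: C classes (indexed by 'I_C), for each class c
   a finite state set S^c, a finite action set A^c, admissible action
   sets A^c(s), a transition kernel phi^c(. | s, a), an action rate
   lambda^c, a mass m^c and a reward r^c(s, a, nu) where nu is a
   state-action population distribution (an element of R^{SA}, SA being
   the disjoint union over c of S^c x A^c). *)
Record model (R : realType) := Model {
  ncls : nat;
  St : 'I_ncls -> finType;
  Act : 'I_ncls -> finType;
  adm : forall c : 'I_ncls, St c -> {set Act c};
  (* kern c s a s2 = phi^c(s2 | s, a) *)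
  kern : forall c : 'I_ncls, St c -> Act c -> St c -> R;
  lam : 'I_ncls -> R;
  mass : 'I_ncls -> R;
  rew : forall c : 'I_ncls, St c -> Act c ->
          ({c' : 'I_ncls & (St c' * Act c')%type} -> R) -> R
}.

Arguments ncls {R}.
Arguments St {R}.
Arguments Act {R}.
Arguments adm {R}.
Arguments kern {R}.
Arguments lam {R}.
Arguments mass {R}.
Arguments rew {R}.

Set Implicit Arguments.
Unset Strict Implicit.
Unset Printing Implicit Defensive.

Section Defs.
Variable R : realType.
Variable M : model R.

Local Notation C := (ncls M).
Local Notation S := (St M).
Local Notation A := (Act M).

Definition SA : finType := {c : 'I_C & (S c * A c)%type}.

Definition pol (c : 'I_C) : finType :=
  {u : {ffun S c -> A c} | [forall s, u s \in adm M c s]}.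

Definition pdet (c : 'I_C) (u : pol c) (s : S c) (a : A c) : R :=
  ((a == val u s) : nat)%:R.

Definition popstate := forall c : 'I_C, S c -> pol c -> R.

Definition inX (mu : popstate) : Prop :=
  forall c, (forall s u, 0 <= mu c s u) /\
            \sum_(s : S c) \sum_(u : pol c) mu c s u = mass M c.

Definition inXSA (nu : SA -> R) : Prop :=
  forall c : 'I_C, (forall s a, 0 <= nu (existT _ c (s, a))) /\
     \sum_(s : S c) \sum_(a : A c) nu (existT _ c (s, a)) = mass M c.

Definition inXU (c : 'I_C) (sg : pol c -> R) : Prop :=
  (forall u, 0 <= sg u) /\ \sum_(u : pol c) sg u = mass M c.

Definition muSA (mu : popstate) : SA -> R :=
  fun x => \sum_(u : pol (tag x))
             mu (tag x) (tagged x).1 u * pdet u (tagged x).1 (tagged x).2.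

Definition muS (mu : popstate) (c : 'I_C) (u : pol c) : R :=
  \sum_(s : S c) mu c s u.

Definition vecSA (nu : SA -> R) : 'rV[R]_#|SA| := \row_i nu (enum_val i).

Definition A1 : Prop :=
  forall c (s : S c) (a : A c), exists g : 'rV[R]_#|SA| -> R,
    (forall nu, inXSA nu -> g (vecSA nu) = rew M c s a nu) /\
    (forall nu, inXSA nu -> differentiable g (vecSA nu)) /\
    (forall v : 'rV[R]_#|SA|, {within vecSA @` inXSA, continuous ('D_v g)}).

Definition trans (c : 'I_C) (u : pol c) : rel (S c) :=
  fun s' s => 0 < kern M c s' (val u s') s.

Definition recurrent (c : 'I_C) (u : pol c) (s : S c) : Prop :=
  forall t, connect (trans u) s t -> connect (trans u) t s.

Definition A2 : Prop :=
  forall c (u : pol c),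
    (exists s, recurrent u s) /\
    (forall s t, recurrent u s -> recurrent u t -> connect (trans u) s t).

(* eta is a stationary distribution of the generator lambda^c (phi^{c,u} - I)
   (under (A2) it is the unique one, eta^{c,u}) *)
Definition stationary (c : 'I_C) (u : pol c) (eta : S c -> R) : Prop :=
  (forall s, 0 <= eta s) /\ \sum_(s : S c) eta s = 1 /\
  forall s : S c, \sum_(s' : S c)
     lam M c * (kern M c s' (val u s') s - ((s == s') : nat)%:R) * eta s' = 0.

Definition etatype := forall c : 'I_C, pol c -> S c -> R.

Definition Fpay (eta : etatype) (mu : popstate) (c : 'I_C) (u : pol c) : R :=
  \sum_(s : S c) \sum_(a in adm M c s)
     eta c u s * pdet u s a * rew M c s a (muSA mu).

Definition MSNE (eta : etatype) (mu : popstate) : Prop :=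
  inX mu /\
  forall c (u : pol c),
    (0 < muS mu u -> forall v : pol c, Fpay eta mu v <= Fpay eta mu u) /\
    (forall s, mu c s u = eta c u s * muS mu u).

Definition supn (T : finType) (f : T -> R) : R := \big[Num.max/0]_(t : T) `|f t|.

Definition protocol := forall c : 'I_C,
  (pol c -> R) -> (pol c -> R) -> pol c -> pol c -> R.

Definition A3 (eta : etatype) (rho : protocol) (c : 'I_C) (Rc : R) : Prop :=
  (exists L : R, forall F1 F2 sg1 sg2, inXU sg1 -> inXU sg2 -> forall u v,
     `|rho c F1 sg1 u v - rho c F2 sg2 u v|
       <= L * (supn (fun w => F1 w - F2 w) + supn (fun w => sg1 w - sg2 w))) /\
  (forall F sg u v, inXU sg -> 0 <= rho c F sg u v) /\
  0 < Rc /\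
  (forall mu, inX mu -> forall u : pol c,
     \sum_(v : pol c | v != u) rho c (@Fpay eta mu c) (@muS mu c) u v <= Rc).

Definition excess_payoff (rho : protocol) (c : 'I_C) : Prop :=
  exists tau : (pol c -> R) -> pol c -> R,
    (exists L : R, forall x y v, `|tau x v - tau y v| <= L * supn (fun w => x w - y w)) /\
    (forall x v, 0 <= tau x v) /\
    (forall Fh, ~ (forall v, Fh v <= 0) -> 0 < \sum_(v : pol c) tau Fh v * Fh v) /\
    (forall F sg u v, inXU sg ->
       rho c F sg u v =
       tau (fun w => F w - (\sum_(w' : pol c) F w' * sg w') / mass M c) v).

Definition pairwise_comparison (rho : protocol) (c : 'I_C) : Prop :=
  exists tau : (pol c -> R) -> pol c -> pol c -> R,
    (exists L : R, forall x y u v,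
        `|tau x u v - tau y u v| <= L * supn (fun w => x w - y w)) /\
    (forall x u v, 0 <= tau x u v) /\
    (forall F u v, Num.sg (tau F u v) = Num.sg (Num.max 0 (F v - F u))) /\
    (forall F sg u v, inXU sg -> rho c F sg u v = tau F u v).

Definition fd (mu : popstate) (c : 'I_C) (s : S c) (u : pol c) : R :=
  lam M c * \sum_(s' : S c) \sum_(a' in adm M c s')
      kern M c s' a' s * pdet u s' a' * mu c s' u
  - lam M c * mu c s u.

Definition fr (eta : etatype) (rho : protocol) (mu : popstate)
    (c : 'I_C) (s : S c) (u : pol c) : R :=
  \sum_(u' : pol c) mu c s u' * rho c (@Fpay eta mu c) (@muS mu c) u' u
  - mu c s u * \sum_(u' : pol c) rho c (@Fpay eta mu c) (@muS mu c) u u'.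

End Defs.

(* Main.v *)
Require Import Defs.
From HB Require Import structures.
From mathcomp Require Import all_boot all_order all_algebra.
From mathcomp Require Import all_classical all_reals all_analysis.
From mathcomp Require Import ring lra.
From Stdlib Require Import Classical.
Import Order.TTheory GRing.Theory Num.Theory.
Local Open Scope ring_scope.

Lemma supn_le (R : realType) (U : finType) (f : U -> R) (b : R) :
  0 <= b -> (forall t, `|f t| <= b) -> supn f <= b.
Proof.
move=> b0 Hf; rewrite /supn; apply: (big_ind (fun y => y <= b)) => //.
by move=> y z Hy Hz; rewrite ge_max Hy Hz.
Qed.

Lemma supn_ge0 (R : realType) (U : finType) (f : U -> R) : 0 <= supn f.
Proof.
rewrite /supn; apply: (big_ind (fun y => 0 <= y)) => //.
by move=> y z Hy _; rewrite le_max Hy.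
Qed.

Lemma perturb (R : realType) (U : finType) (tau : (U -> R) -> U -> R) (L : R)
  (Lip : forall x y v, `|tau x v - tau y v| <= L * supn (fun w => x w - y w))
  (tge0 : forall x v, 0 <= tau x v)
  (pc : forall Fh, ~ (forall v, Fh v <= 0) -> 0 < \sum_(v : U) tau Fh v * Fh v)
  (Fh : U -> R) (Fle : forall k, Fh k <= 0) (v w : U) (vw : v != w)
  (Fv : Fh v = 0) (Fw : Fh w = 0) : 2 * tau Fh w <= tau Fh v.
Proof.
set a := tau Fh v; set b := tau Fh w.
rewrite leNgt; apply/negP => Hab.
set L' := `|L|.
have L'0 : 0 <= L' by rewrite normr_ge0.
set eps := (2 * b - a) / (6 * L' + 6).
have den : 0 < 6 * L' + 6 by lra.
have epsE : eps * (6 * L' + 6) = 2 * b - a by rewrite /eps divfK // gt_eqF.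
have eps0 : 0 < eps by rewrite /eps divr_gt0 // subr_gt0.
pose d k : R := (if k == v then eps else 0) - (if k == w then 2 * eps else 0).
pose x k := Fh k + d k.
have dv : d v = eps by rewrite /d eqxx (negPf vw) subr0.
have dw : d w = - (2 * eps) by rewrite /d eqxx eq_sym (negPf vw) sub0r.
have sup : supn (fun k => x k - Fh k) <= 2 * eps.
  apply: supn_le; first lra.
  move=> k; rewrite /x addrC addKr /d.
  by case: (k == v); case: (k == w); apply/ler_normlP; split; lra.
have lip : forall k, `|tau x k - tau Fh k| <= L' * (2 * eps).
  move=> k; apply: le_trans (Lip x Fh k) _.
  have S0 := @supn_ge0 _ _ (fun k => x k - Fh k).
  have := ler_norm L; rewrite -/L' => HL.
  nra.
have pos : 0 < \sum_k tau x k * x k.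
  apply: pc => H; have := H v; rewrite /x Fv dv add0r; lra.
have bound : \sum_k tau x k * x k <= tau x v * eps - tau x w * (2 * eps).
  apply: (@le_trans _ _ (\sum_k tau x k * d k)).
    apply: ler_sum => k _; rewrite {2}/x mulrDr.
    have := mulr_ge0_le0 (tge0 x k) (Fle k); lra.
  rewrite (bigD1 v) //= (bigD1 w) 1?eq_sym //= big1 ?addr0 ?dv ?dw.
    by rewrite mulrN.
  by move=> k /andP[kw kv]; rewrite /d (negPf kv) (negPf kw) subr0 mulr0.
have := lip v; have := lip w; rewrite /a /b.
move=> /ler_normlP [Hw1 Hw2] /ler_normlP [Hv1 Hv2].
have H1 : 0 < (tau x v - 2 * tau x w) * eps.
  have := lt_le_trans pos bound; lra.
rewrite pmulr_lgt0 // in H1.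
have E2 : 6 * (L' * eps) + 6 * eps = 2 * b - a by rewrite -epsE; ring.
have E3 : L' * (2 * eps) = 2 * (L' * eps) by ring.
rewrite E3 -/a -/b in Hw1 Hv2.
move: (L' * eps) Hw1 Hv2 E2 => q Hw1 Hv2 E2.
lra.
Qed.

Lemma ep_case (R : realType) (U : finType) (tau : (U -> R) -> U -> R) (L : R)
  (Lip : forall x y v, `|tau x v - tau y v| <= L * supn (fun w => x w - y w))
  (tge0 : forall x v, 0 <= tau x v)
  (pc : forall Fh, ~ (forall v, Fh v <= 0) -> 0 < \sum_(v : U) tau Fh v * Fh v)
  (sg F : U -> R) (m : R) (m0 : 0 < m) (sge0 : forall u, 0 <= sg u)
  (ssum : \sum_u sg u = m)
  (rest : forall u,
     \sum_u' sg u' * tau (fun w => F w - (\sum_w' F w' * sg w') / m) u =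
     sg u * \sum_u' tau (fun w => F w - (\sum_w' F w' * sg w') / m) u') :
  (forall u, 0 < sg u -> forall v, F v <= F u) /\
  (forall y : U -> R, (forall u, sg u = 0 -> y u = 0) -> forall u,
     (\sum_u' y u') * tau (fun w => F w - (\sum_w' F w' * sg w') / m) u =
     y u * \sum_u' tau (fun w => F w - (\sum_w' F w' * sg w') / m) u').
Proof.
set avg := (\sum_w' F w' * sg w') / m.
set Fh := fun w => F w - avg.
set T := \sum_u' tau Fh u'.
have mne0 : m != 0 by rewrite gt_eqF.
have tauE : forall u, tau Fh u = sg u * T / m.
  move=> u; have := rest u; rewrite -mulr_suml ssum => <-.
  by rewrite mulrAC divff // mul1r.
have sF : \sum_v sg v * Fh v = 0.
  rewrite /Fh; under eq_bigr => v _ do rewrite mulrBr.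
  rewrite sumrB -mulr_suml ssum /avg mulrCA divff // mulr1.
  by apply/eqP; rewrite subr_eq0; apply/eqP; apply: eq_bigr => v _; rewrite mulrC.
have key : \sum_v tau Fh v * Fh v = 0.
  transitivity (\sum_v (T / m) * (sg v * Fh v)).
    by apply: eq_bigr => v _; rewrite tauE; ring.
  by rewrite -mulr_sumr sF mulr0.
have Fle : forall v, Fh v <= 0.
  by apply: NNPP => H; have := pc _ H; rewrite key ltxx.
have supp : forall u, 0 < sg u -> Fh u = 0.
  move=> u su.
  have H : forall w, true -> 0 <= sg w * - Fh w.
    by move=> w _; apply: mulr_ge0 => //; rewrite oppr_ge0.
  have E : \sum_w sg w * - Fh w = 0.
    by under eq_bigr => w _ do rewrite mulrN; rewrite sumrN sF oppr0.
  have /eqP := psumr_eq0P H E (i := u) isT.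
  by rewrite mulf_eq0 gt_eqF //= oppr_eq0 => /eqP.
split.
  move=> u su v; have := Fle v; have := supp u su; rewrite /Fh; lra.
move=> y hy u.
have [T0|Tne0] := eqVneq T 0.
  by rewrite tauE T0 !mulr0 mul0r mulr0.
have single : forall v w, 0 < sg v -> 0 < sg w -> v = w.
  move=> v w sv sw; apply/eqP; apply: contraT => vw.
  have h1 := @perturb _ _ _ _ Lip tge0 pc Fh Fle v w vw (supp v sv) (supp w sw).
  have wv : w != v by rewrite eq_sym.
  have h2 := @perturb _ _ _ _ Lip tge0 pc Fh Fle w v wv (supp w sw) (supp v sv).
  have tv0 : tau Fh v = 0.
    have := tge0 Fh v; have := tge0 Fh w; lra.
  move: tv0; rewrite tauE => /eqP; rewrite !mulf_eq0 invr_eq0 (gt_eqF sv) (negPf Tne0).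
  by rewrite (negPf mne0).
have [u0 su0] : exists u0, 0 < sg u0.
  apply: NNPP => H.
  have : \sum_u sg u <= 0.
    apply: sumr_le0 => v _; rewrite leNgt; apply/negP => Hv; apply: H; by exists v.
  lra.
have oth : forall v, v != u0 -> sg v = 0.
  move=> v vu; have := sge0 v; rewrite le_eqVlt => /orP[/eqP <- //|sv].
  by move: vu; rewrite (single _ _ sv su0) eqxx.
have yE : \sum_u' y u' = y u0.
  rewrite (bigD1 u0) //= big1 ?addr0 // => v vu; exact: hy (oth v vu).
have sE : sg u0 = m.
  rewrite -ssum (bigD1 u0) //= big1 ?addr0 // => v vu; exact: oth v vu.
rewrite yE -/T tauE.
have [->|uu] := eqVneq u u0.
  by rewrite sE mulrAC divff // mul1r.
by rewrite (oth u uu) (hy u (oth u uu)) !mul0r mulr0.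
Qed.

Lemma pc_case (R : realType) (U : finType) (tau : (U -> R) -> U -> U -> R)
  (tge0 : forall x u v, 0 <= tau x u v)
  (sgn : forall F u v, Num.sg (tau F u v) = Num.sg (Num.max 0 (F v - F u)))
  (sg F : U -> R) (sge0 : forall u, 0 <= sg u) (u1 : U) (su1 : 0 < sg u1)
  (rest : forall u, \sum_u' sg u' * tau F u' u = sg u * \sum_u' tau F u u') :
  (forall u, 0 < sg u -> forall v, F v <= F u) /\
  (forall u v, 0 < sg u -> tau F u v = 0).
Proof.
have tau0 : forall u v, F v <= F u -> tau F u v = 0.
  move=> u v H; apply/eqP; rewrite -sgr_eq0 sgn max_l ?sgr0 //.
  by rewrite subr_le0.
have taupos : forall u v, F u < F v -> 0 < tau F u v.
  move=> u v H; rewrite lt_def tge0 andbT -sgr_eq0 sgn max_r ?gtr0_sg ?oner_eq0 //;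
  by rewrite ?subr_gt0 // ltW // subr_gt0.
have [u0 su0 Hu0] := @arg_minP _ R U u1 (fun u => 0 < sg u) F su1.
have maxi : forall v, F v <= F u0.
  move=> v; rewrite leNgt; apply/negP => Hv.
  have inflow : \sum_u' sg u' * tau F u' u0 = 0.
    apply: big1 => u' _; have := sge0 u'; rewrite le_eqVlt => /orP[/eqP <-|su'].
      by rewrite mul0r.
    by rewrite tau0 ?mulr0 //; apply: Hu0.
  have outflow : 0 < sg u0 * \sum_u' tau F u0 u'.
    apply: mulr_gt0 => //; rewrite (bigD1 v) //=.
    apply: lt_le_trans (taupos _ _ Hv) _; rewrite lerDl.
    by apply: sumr_ge0 => *.
  by move: outflow; rewrite -rest inflow ltxx.
split.
  by move=> u su v; apply: le_trans (maxi v) (Hu0 u su).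
move=> u v su; apply: tau0; apply: le_trans (maxi v) (Hu0 u su).
Qed.


Set Implicit Arguments. Unset Strict Implicit.

Definition mrel (R : realFieldType) (T : finType) (P : T -> T -> R) : rel T :=
  fun a b => 0 < P a b.

Definition mrec (R : realFieldType) (T : finType) (P : T -> T -> R) (s : T) : Prop :=
  forall t, connect (mrel P) s t -> connect (mrel P) t s.

Lemma reach_rec (R : realFieldType) (T : finType) (P : T -> T -> R) :
  forall s, exists r, connect (mrel P) s r /\ mrec P r.
Proof.
suff H : forall n s, (#|[set t | connect (mrel P) s t]| <= n)%N ->
  exists r, connect (mrel P) s r /\ mrec P r.
  by move=> s; apply: (H _ s (leqnn _)).
elim=> [|n IH] s.
  rewrite leqn0 cards_eq0 => /eqP/setP/(_ s); rewrite !inE connect0 => //.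
move=> Hc.
case: (classic (mrec P s)) => Hs; first by exists s; split => //; apply: connect0.
have [t /(_ _) Ht] : exists t, ~ (connect (mrel P) s t -> connect (mrel P) t s).
  by apply: not_all_ex_not.
have Hst : connect (mrel P) s t by apply: NNPP => Hn; apply: Ht => /Hn.
have Hts : ~ connect (mrel P) t s by move=> H; apply: Ht.
have [r [Htr Hr]] : exists r, connect (mrel P) t r /\ mrec P r.
  apply: IH.
  have Hsub : [set x | connect (mrel P) t x] \proper [set x | connect (mrel P) s x].
    apply/fintype.properP; split.
      by apply/fintype.subsetP => x; rewrite !inE => Hx; apply: connect_trans Hst Hx.
    by exists s; rewrite !inE ?connect0 //; apply/negP.
  by rewrite -ltnS; apply: leq_trans (proper_card Hsub) Hc.
by exists r; split => //; apply: connect_trans Hst Htr.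
Qed.

Lemma harm_step (R : realFieldType) (T : finType) (P : T -> T -> R)
  (Pge0 : forall a b, 0 <= P a b) (Psum : forall a, \sum_b P a b = 1)
  (h : T -> R) (harm : forall a, \sum_b P a b * h b = h a) (m : R)
  (hm : forall t, h t <= m) a b : h a = m -> mrel P a b -> h b = m.
Proof.
move=> ha Pab.
have E : \sum_c P a c * (m - h c) = 0.
  under eq_bigr => c _ do rewrite mulrBr.
  by rewrite sumrB harm -mulr_suml Psum mul1r ha subrr.
have H : forall c : T, true -> 0 <= P a c * (m - h c).
  by move=> c _; apply: mulr_ge0 => //; rewrite subr_ge0.
have /eqP := psumr_eq0P H E (i := b) isT.
rewrite mulf_eq0 => /orP[/eqP P0|]; first by move: Pab; rewrite /mrel P0 ltxx.
by rewrite subr_eq0 => /eqP.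
Qed.

Lemma harm_connect (R : realFieldType) (T : finType) (P : T -> T -> R)
  (Pge0 : forall a b, 0 <= P a b) (Psum : forall a, \sum_b P a b = 1)
  (h : T -> R) (harm : forall a, \sum_b P a b * h b = h a) (m : R)
  (hm : forall t, h t <= m) a b : h a = m -> connect (mrel P) a b -> h b = m.
Proof.
move=> ha /connectP[p Hp ->]; elim: p a ha Hp => [|x p IH] a ha //=.
move=> /andP[Hax Hp]; apply: IH Hp.
exact: (harm_step Pge0 Psum harm hm ha Hax).
Qed.

Lemma harm_const (R : realFieldType) (T : finType) (P : T -> T -> R)
  (Pge0 : forall a b, 0 <= P a b) (Psum : forall a, \sum_b P a b = 1)
  (A2 : (exists s, mrec P s) /\
        (forall s t, mrec P s -> mrec P t -> connect (mrel P) s t))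
  (h : T -> R) (harm : forall a, \sum_b P a b * h b = h a) :
  forall a b, h a = h b.
Proof.
move=> a b.
have key : forall (g : T -> R), (forall x, \sum_y P x y * g y = g x) ->
   exists2 m, (forall t, g t <= m) & forall r, mrec P r -> g r = m.
  move=> g hg.
  have [i _ Hi] := @arg_maxP _ R T a predT g isT.
  exists (g i); first by move=> t; apply: Hi.
  have [r [Hir Hr]] := reach_rec P i.
  have gr : g r = g i by apply: (harm_connect Pge0 Psum hg _ (erefl _) Hir) => t; apply: Hi.
  move=> r' Hr'; rewrite -gr.
  apply: (harm_connect Pge0 Psum hg _ (erefl _) (A2.2 _ _ Hr Hr')).
  by move=> t; rewrite gr; apply: Hi.
have [m1 H1 R1] := key h harm.
have hN : forall a, \sum_b P a b * (- h b) = - h a.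
  by move=> x; rewrite -harm -sumrN; apply: eq_bigr => y _; rewrite mulrN.
have [m2 H2 R2] := key (fun t => - h t) hN.
have [r0 Hr0] := A2.1.
have E : m1 = - m2 by rewrite -(R1 _ Hr0) -(R2 _ Hr0) opprK.
have Ha1 := H1 a; have Ha2 := H2 a; have Hb1 := H1 b; have Hb2 := H2 b.
rewrite E in Ha1 Hb1.
have : h a = - m2 by apply/eqP; rewrite eq_le Ha1 /= -lerN2 opprK.
have : h b = - m2 by apply/eqP; rewrite eq_le Hb1 /= -lerN2 opprK.
by move=> -> ->.
Qed.

Lemma sum_ev (R : realFieldType) (T : finType) (F : T -> R) :
  \sum_(i < #|T|) F (enum_val i) = \sum_t F t.
Proof. by rewrite -(big_enum_val (A := T)). Qed.

Lemma stat_unique (R : realFieldType) (T : finType) (P : T -> T -> R)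
  (Pge0 : forall a b, 0 <= P a b) (Psum : forall a, \sum_b P a b = 1)
  (A2 : (exists s, mrec P s) /\
        (forall s t, mrec P s -> mrec P t -> connect (mrel P) s t))
  (x e : T -> R) (hx : forall t, \sum_s P s t * x s = x t)
  (he : forall t, \sum_s P s t * e s = e t) (esum : \sum_s e s = 1) :
  forall t, x t = (\sum_s x s) * e t.
Proof.
pose Pm : 'M[R]_#|T| := \matrix_(i, j) P (enum_val i) (enum_val j).
pose A := Pm - 1%:M.
pose rv (f : T -> R) : 'rV[R]_#|T| := \row_j f (enum_val j).
have stat : forall f : T -> R, (forall t, \sum_s P s t * f s = f t) ->
    (rv f <= kermx A)%MS.
  move=> f hf; apply/sub_kermxP; rewrite mulmxBr mulmx1; apply/eqP; rewrite subr_eq0; apply/eqP.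
  apply/rowP => j; rewrite !mxE -hf -[RHS]sum_ev; apply: eq_bigr => i _.
  by rewrite !mxE mulrC.
have [r0 _] := A2.1.
have harm : (kermx A^T <= (const_mx 1 : 'rV[R]_#|T|))%MS.
  apply/row_subP => i; move: (row_sub i (kermx A^T)); move: (row i _) => h hsub.
  have hh : h *m A^T = 0 by apply/sub_kermxP.
  have AT : A^T = Pm^T - 1%:M by apply/matrixP => i1 j1; rewrite !mxE eq_sym.
  rewrite AT in hh.
  pose g t := h 0 (enum_rank t).
  have hg : forall a, \sum_b P a b * g b = g a.
    move=> a; rewrite /g; move: hh; rewrite mulmxBr mulmx1 => /eqP; rewrite subr_eq0 => /eqP /rowP /(_ (enum_rank a)).
    rewrite !mxE => <-; rewrite -[LHS]sum_ev; apply: eq_bigr => j _.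
    by rewrite !mxE enum_valK enum_rankK mulrC.
  have -> : h = g r0 *: const_mx 1.
    apply/rowP => j; rewrite !mxE mulr1.
    have := harm_const Pge0 Psum A2 hg (enum_val j) r0.
    by rewrite /g enum_valK.
  by apply: scalemx_sub.
have rk : (\rank (kermx A) <= 1)%N.
  have h2 := leq_trans (mxrank_leqif_sup harm).1 (rank_leq_row _).
  by rewrite mxrank_ker -(mxrank_tr A) -mxrank_ker.
have ene0 : rv e != 0.
  apply/negP => /eqP/rowP H; move: esum; rewrite -sum_ev big1 => [/eqP|j _].
    by rewrite eq_sym oner_eq0.
  by have := H j; rewrite !mxE.
have ek := stat e he.
have rke : \rank (rv e) = 1%N.
  apply/eqP; rewrite eqn_leq rank_leq_row lt0n mxrank_eq0 ene0 //.
have Ke : (kermx A <= rv e)%MS.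
  have := mxrank_leqif_sup ek; rewrite rke => /leqifP.
  case: ifP => // _ Hlt; move: (leq_ltn_trans rk Hlt); by rewrite ltnn.
have /submxP [D HD] := submx_trans (stat x hx) Ke.
have Hx : forall t, x t = D 0 0 * e t.
  move=> t; have := congr1 (fun M : 'rV[R]_#|T| => M 0 (enum_rank t)) HD.
  by rewrite !mxE big_ord1 !mxE enum_rankK.
have -> : \sum_s x s = D 0 0.
  by under eq_bigr => s _ do rewrite Hx; rewrite -mulr_sumr esum mulr1.
exact: Hx.
Qed.


Unset Implicit Arguments. Set Strict Implicit.

Theorem theorem5 (R : realType) (M : model R) (eta : etatype M)
    (rho : protocol M) (Rrev : 'I_(ncls M) -> R) (mu : popstate M) :
  (* standing structure of the model *)
  (forall c, 0 < mass M c) ->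
  (forall c, 0 < lam M c) ->
  (forall c (s : St M c), exists a, a \in adm M c s) ->
  (forall c (s : St M c) (a : Act M c), a \in adm M c s ->
     (forall s2, 0 <= kern M c s a s2) /\ \sum_(s2 : St M c) kern M c s a s2 = 1) ->
  (* eta^{c,u} is the stationary distribution of lambda^c (phi^{c,u} - I) *)
  (forall c (u : pol c), stationary u (eta c u)) ->
  A1 M -> A2 M -> (forall c, A3 eta rho c (Rrev c)) ->
  (forall c, excess_payoff rho c \/ pairwise_comparison rho c) ->
  inX mu ->
  (forall c (s : St M c) (u : pol c), fd mu s u + fr eta rho mu s u = 0) ->
  MSNE eta mu.
Proof.
move=> mpos lpos _ stoch stat _ HA2 _ Hprot HX Hrest.
split => // c.
set sg := @muS R M mu c.
set F := @Fpay R M eta mu c.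
have sge0 : forall u, 0 <= sg u.
  by move=> u; apply: sumr_ge0 => s _; apply: (HX c).1.
have ssum : \sum_u sg u = mass M c.
  by rewrite /sg /muS exchange_big /=; apply: (HX c).2.
have XU : inXU sg by split.
have muz : forall u s, sg u = 0 -> mu c s u = 0.
  move=> u s H.
  have H' : forall s', true -> 0 <= mu c s' u by move=> s' _; apply: (HX c).1.
  exact: (psumr_eq0P H' H).
have uadm : forall (u : pol c) s, val u s \in adm M c s.
  by move=> u s; have /forallP := valP u; apply.
have fdE : forall s u, fd mu s u =
    lam M c * (\sum_s' kern M c s' (val u s') s * mu c s' u) - lam M c * mu c s u.
  move=> s u; rewrite /fd; congr (_ * _ - _); apply: eq_bigr => s' _.
  rewrite (bigD1 (val u s')) ?uadm //= big1 ?addr0.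
    by rewrite /pdet eqxx mulr1.
  by move=> a /andP[_ /negPf ha]; rewrite /pdet ha mulr0 mul0r.
have fdsum : forall u : pol c, \sum_s fd mu s u = 0.
  move=> u; under eq_bigr => s _ do rewrite fdE.
  rewrite sumrB -!mulr_sumr exchange_big /=.
  under eq_bigr => s' _ do rewrite -mulr_suml (stoch _ _ _ (uadm u s')).2 mul1r.
  by rewrite subrr.
have rest : forall u, \sum_u' sg u' * rho c F sg u' u = sg u * \sum_u' rho c F sg u u'.
  move=> u; apply/eqP; rewrite -subr_eq0; apply/eqP.
  have : \sum_s fr eta rho mu s u = 0.
    have E : \sum_s (fd mu s u + fr eta rho mu s u) = 0 by apply: big1 => s _; apply: Hrest.
    by move: E; rewrite big_split /= fdsum add0r.
  move=> H; transitivity (\sum_s fr eta rho mu s u); last exact: H.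
  rewrite /fr sumrB exchange_big /= -/F -/sg; congr (_ - _).
    by apply: eq_bigr => u' _; rewrite /sg /muS mulr_suml.
  by rewrite /sg /muS mulr_suml.
have [u1 su1] : exists u1, 0 < sg u1.
  apply: NNPP => H.
  have : \sum_u sg u <= 0.
    apply: sumr_le0 => v _; rewrite leNgt; apply/negP => Hv; apply: H; by exists v.
  by rewrite ssum; have := mpos c; lra.
have zterm : forall s u' X, (0 < sg u' -> X = 0) -> mu c s u' * X = 0.
  move=> s u' X HX'; have := sge0 u'; rewrite le_eqVlt => /orP[/eqP H|H].
    by rewrite muz ?mul0r.
  by rewrite HX' ?mulr0.
have [Nash frz] : (forall u, 0 < sg u -> forall v, F v <= F u) /\
                  (forall (s : St M c) (u : pol c), fr eta rho mu s u = 0).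
  case: (Hprot c) => [[tau [[L Lip] [tge0 [pc rhoE]]]] | [tau [[L Lip] [tge0 [sgn rhoE]]]]].
    have rhoF : rho c F sg =
        (fun _ v => tau (fun w => F w - (\sum_w' F w' * sg w') / mass M c) v).
      by apply/funext => u; apply/funext => v; apply: rhoE.
    have rest' := rest; rewrite rhoF /= in rest'.
    have [N Z] := @ep_case _ _ tau L Lip tge0 pc sg F (mass M c) (mpos c) sge0 ssum rest'.
    split => // s u; rewrite /fr -/F -/sg rhoF /= -mulr_suml.
    by rewrite (Z (fun u' => mu c s u') (fun u' H => muz u' s H) u) subrr.
  have rhoF : rho c F sg = tau F.
    by apply/funext => u; apply/funext => v; apply: rhoE.
  have rest' := rest; rewrite rhoF /= in rest'.
  have [N Z] := @pc_case _ _ tau tge0 sgn sg F sge0 u1 su1 rest'.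
  split => // s u; rewrite /fr -/F -/sg rhoF /=.
  rewrite big1 ?sub0r.
    by rewrite zterm ?oppr0 // => H; apply: big1 => v _; apply: Z.
  by move=> u' _; apply: zterm => H; apply: Z.
move=> u; split; first exact: Nash.
have Pge0 : forall a b, 0 <= kern M c a (val u a) b.
  by move=> a b; apply: (stoch _ _ _ (uadm u a)).1.
have Psum : forall a, \sum_b kern M c a (val u a) b = 1.
  by move=> a; apply: (stoch _ _ _ (uadm u a)).2.
have hx : forall t, \sum_s kern M c s (val u s) t * mu c s u = mu c t u.
  move=> t; have := Hrest c t u; rewrite frz addr0 fdE => /eqP; rewrite subr_eq0.
  by move/eqP/mulfI; apply; rewrite gt_eqF.
have [st0 [st1 st2]] := stat c u.
have he : forall t, \sum_s kern M c s (val u s) t * eta c u s = eta c u t.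
  move=> t; have := st2 t.
  have E : \sum_s' lam M c * (kern M c s' (val u s') t - ((t == s') : nat)%:R) * eta c u s'
      = lam M c * (\sum_s' kern M c s' (val u s') t * eta c u s')
        - lam M c * (\sum_s' ((t == s') : nat)%:R * eta c u s').
    rewrite !mulr_sumr -sumrB; apply: eq_bigr => s' _; ring.
  have D : \sum_s' ((t == s') : nat)%:R * eta c u s' = eta c u t.
    rewrite (bigD1 t) //= eqxx mul1r big1 ?addr0 // => s' /negPf.
    by rewrite eq_sym => ->; rewrite mul0r.
  rewrite E D => /eqP; rewrite subr_eq0 => /eqP /mulfI; apply.
  by rewrite gt_eqF.
move=> s.
have := @stat_unique R (St M c) (fun a b => kern M c a (val u a) b) Pge0 Psum
  (HA2 c u) (fun s => mu c s u) (eta c u) hx he st1 s.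
by rewrite mulrC.
Qed.
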